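(* Let $\mathcal{H}$ be an infinite-dimensional separable Hilbert space with inner product $\langle\cdot,\cdot\rangle$ (linear in the second argument), $\mathcal{D}\subseteq\mathcal{H}$ a dense subspace, $\{e_n\}_{n\ge0}$ an orthonormal basis of $\mathcal{H}$ with $e_n\in\mathcal{D}$, and $R$ a bounded operator with bounded inverse such that $\mathcal{D}$ is stable under $R,R^\dagger,R^{-1},(R^{-1})^\dagger$. Put $\varphi_n=Re_n$, $\psi_n=(R^{-1})^\dagger e_n$. Let $H$ be an operator with $D(H)\supseteq\mathcal{D}$, $D(H^\dagger)\supseteq\mathcal{D}$, $H\mathcal{D}\subseteq\mathcal{D}$, and suppose $H$ is $(\varphi,\psi)$-tridiagonal, i.e. there are complex sequences $\{b_n\},\{a_n\},\{b_n'\}$ with $\langle\psi_n,H\varphi_m\rangle=b_n\delta_{n,m+1}+a_n\delta_{n,m}+b_n'\delta_{n,m-1}$ for all $n,m\ge0$; set $b'_{-1}=0$. Let $H_0:=R^{-1}HR$. If $H_0=H_0^\dagger$, then $a_n\in\mathbb{R}$ for all $n$ and $b_m=\overline{b'_{m-1}}$ for all $m\ge0$. Conversely, if $a_m\in\mathbb{R}$ and $b_m=\overline{b'_{m-1}}$ for all $m\ge0$, then $\langle f,H_0g\rangle=\langle H_0f,g\rangle$ for all $f,g$ in the linear span $\mathcal{E}$ of $\{e_n\}$. *)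

(* Defs.v *)
From HB Require Import structures.
From mathcomp Require Import all_boot all_order all_algebra.
From mathcomp Require Import all_reals.
From mathcomp Require Export complex.
Set Implicit Arguments. Unset Strict Implicit. Unset Printing Implicit Defensive.
Import Order.TTheory GRing.Theory Num.Theory.
Local Open Scope ring_scope.

Section Hilbert.
Variables (R : realType) (V : lmodType R[i]) (ip : V -> V -> R[i]).

Definition inner_product : Prop :=
  [/\ forall (a : R[i]) f g h, ip f (a *: g + h) = a * ip f g + ip f h,
      forall f g, ip g f = (ip f g)^* &
      forall f, f != 0 -> 0 < ip f f].

Definition dist2 (f g : V) : R[i] := ip (f - g) (f - g).

Definition complete_space : Prop :=
  forall u : nat -> V,
    (forall eps : R[i], 0 < eps -> exists N, forall m n, (N <= m)%N -> (N <= n)%N ->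
        dist2 (u m) (u n) < eps) ->
    exists l, forall eps : R[i], 0 < eps -> exists N, forall n, (N <= n)%N ->
        dist2 (u n) l < eps.

Definition hilbert_space : Prop := inner_product /\ complete_space.

Definition orthonormal_basis (e : nat -> V) : Prop :=
  (forall n m, ip (e n) (e m) = (n == m)%:R) /\
  (forall f, (forall n, ip (e n) f = 0) -> f = 0).

Definition subspace (D : V -> Prop) : Prop :=
  [/\ D 0, forall f g, D f -> D g -> D (f + g) & forall (a : R[i]) f, D f -> D (a *: f)].

Definition dense (D : V -> Prop) : Prop :=
  forall f (eps : R[i]), 0 < eps -> exists d, D d /\ dist2 f d < eps.

Definition bounded_op (T : V -> V) : Prop :=
  exists c : R[i], forall f, ip (T f) (T f) <= c * ip f f.

Definition is_bounded_adjoint (T Td : V -> V) : Prop :=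
  forall f g, ip (Td f) g = ip f (T g).

Definition linear_on (domA : V -> Prop) (A : V -> V) : Prop :=
  subspace domA /\
  (forall (a : R[i]) f g, domA f -> domA g -> A (a *: f + g) = a *: A f + A g).

Definition adj_dom (domA : V -> Prop) (A : V -> V) (g : V) : Prop :=
  exists h, forall f, domA f -> ip g (A f) = ip h f.

Definition self_adjoint (domA : V -> Prop) (A : V -> V) : Prop :=
  (forall g, domA g <-> adj_dom domA A g) /\
  (forall f g, domA f -> domA g -> ip g (A f) = ip (A g) f).

Definition in_span (e : nat -> V) (f : V) : Prop :=
  exists (n : nat) (c : nat -> R[i]), f = \sum_(k < n) c k *: e k.

End Hilbert.

(* Main.v *)
Require Import Defs.
From HB Require Import structures.
From mathcomp Require Import all_boot all_order all_algebra.
From mathcomp Require Import all_reals.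
From mathcomp Require Import complex.
From mathcomp Require Import zify.
Import Order.TTheory GRing.Theory Num.Theory.
Local Open Scope ring_scope.

Section Aux.
Variables (R : realType) (V : lmodType R[i]) (ip : V -> V -> R[i]).
Hypothesis hip : inner_product ip.

Lemma ip0r f : ip f 0 = 0.
Proof.
case: hip => hl _ _; have := hl (-1) f 0 0.
by rewrite scaler0 addr0 => ->; rewrite mulN1r addNr.
Qed.

Lemma ipDr f g h : ip f (g + h) = ip f g + ip f h.
Proof. by case: hip => hl _ _; have := hl 1 f g h; rewrite scale1r mul1r. Qed.

Lemma ipZr f a g : ip f (a *: g) = a * ip f g.
Proof. by case: hip => hl _ _; have := hl a f g 0; rewrite !addr0 ip0r addr0. Qed.

Lemma ipC f g : ip g f = (ip f g)^*.
Proof. by case: hip. Qed.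

Lemma ip_sumr f n (c : nat -> R[i]) (y : nat -> V) :
  ip f (\sum_(k < n) c k *: y k) = \sum_(k < n) c k * ip f (y k).
Proof.
elim: n => [|n IH]; first by rewrite !big_ord0 ip0r.
by rewrite !big_ord_recr /= ipDr IH ipZr.
Qed.

Lemma ip_suml f n (c : nat -> R[i]) (y : nat -> V) :
  ip (\sum_(k < n) c k *: y k) f = \sum_(k < n) (c k)^* * ip (y k) f.
Proof.
rewrite ipC ip_sumr rmorph_sum; apply: eq_bigr => k _.
by rewrite rmorphM /= -ipC.
Qed.

End Aux.

Theorem lemma3 (R : realType) (V : lmodType R[i]) (ip : V -> V -> R[i])
  (hV : hilbert_space ip)
  (D : V -> Prop) (hDsub : subspace D) (hDdense : dense ip D)
  (e : nat -> V) (he : orthonormal_basis ip e) (heD : forall n, D (e n))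
  (Rop Rinv Rd Rinvd : {linear V -> V})
  (hRb : bounded_op ip Rop) (hRinvb : bounded_op ip Rinv)
  (hRK : cancel Rop Rinv) (hRinvK : cancel Rinv Rop)
  (hRd : is_bounded_adjoint ip Rop Rd) (hRinvd : is_bounded_adjoint ip Rinv Rinvd)
  (hDR : forall f, D f -> D (Rop f)) (hDRd : forall f, D f -> D (Rd f))
  (hDRinv : forall f, D f -> D (Rinv f)) (hDRinvd : forall f, D f -> D (Rinvd f))
  (domH : V -> Prop) (H : V -> V) (hHlin : linear_on domH H)
  (hDdomH : forall f, D f -> domH f)
  (hDdomHd : forall f, D f -> adj_dom ip domH H f)
  (hHD : forall f, D f -> D (H f))
  (a b b' : nat -> R[i])
  (htri : forall n m, ip (Rinvd (e n)) (H (Rop (e m))) =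
      (if n == m.+1 then b n else 0) + (if n == m then a n else 0)
      + (if n.+1 == m then b' n else 0))
  (hb0 : b 0%N = 0) :
  let domH0 := fun f => domH (Rop f) in
  let H0 := fun f => Rinv (H (Rop f)) in
  (self_adjoint ip domH0 H0 ->
     (forall n, a n \is Num.real) /\
     (forall m, b m = if m is k.+1 then (b' k)^* else 0)) /\
  ((forall m, a m \is Num.real) ->
   (forall m, b m = if m is k.+1 then (b' k)^* else 0) ->
   forall f g, in_span e f -> in_span e g -> ip f (H0 g) = ip (H0 f) g).
Proof.
move=> domH0 H0.
have hip : inner_product ip by case: hV.
have T : forall n m, ip (e n) (H0 (e m)) =
      (if n == m.+1 then b n else 0) + (if n == m then a n else 0)
      + (if n.+1 == m then b' n else 0).
  by move=> n m; rewrite /H0 -hRinvd htri.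
have Tnn : forall n, ip (e n) (H0 (e n)) = a n.
  move=> n; rewrite T eqxx.
  have -> : (n == n.+1) = false by lia.
  have -> : (n.+1 == n) = false by lia.
  by rewrite add0r addr0.
have TSn : forall k, ip (e k.+1) (H0 (e k)) = b k.+1.
  move=> k; rewrite T eqxx.
  have -> : (k.+1 == k) = false by lia.
  have -> : (k.+2 == k) = false by lia.
  by rewrite !addr0.
have TnS : forall k, ip (e k) (H0 (e k.+1)) = b' k.
  move=> k; rewrite T eqxx.
  have -> : (k == k.+2) = false by lia.
  have -> : (k == k.+1) = false by lia.
  by rewrite !add0r.
have dom_e : forall k, domH0 (e k) by move=> k; apply/hDdomH/hDR/heD.
split.
  case=> _ hsa.
  have sym : forall n m, ip (e n) (H0 (e m)) = (ip (e m) (H0 (e n)))^*.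
    by move=> n m; rewrite hsa ?dom_e // -(@ipC _ _ _ hip).
  split.
    move=> n; rewrite CrealE; apply/eqP.
    by rewrite -Tnn -sym.
  case=> [|k] //.
  by rewrite -TSn sym TnS.
move=> ha hb.
have sym : forall n m, ip (e n) (H0 (e m)) = (ip (e m) (H0 (e n)))^*.
  move=> n m; rewrite !T.
  have [->|hnm] := eqVneq n m.
    rewrite ?eqxx.
    have E1 : (m == m.+1) = false by lia.
    rewrite ?E1.
    have E2 : (m.+1 == m) = false by lia.
    rewrite ?E2.
    rewrite add0r !addr0.
    by move: (ha m); rewrite CrealE => /eqP ->.
  case: (eqVneq n m.+1) => [->|h1].
    rewrite ?eqxx.
    have E3 : (m.+1 == m) = false by lia.
    rewrite ?E3.
    have E4 : (m.+2 == m) = false by lia.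
    rewrite ?E4.
    have E5 : (m == m.+2) = false by lia.
    rewrite ?E5.
    have E6 : (m == m.+1) = false by lia.
    rewrite ?E6.
    by rewrite hb !addr0 !add0r.
  case: (eqVneq n.+1 m) => [<-|h2].
    rewrite ?eqxx.
    have E7 : (n.+1 == n) = false by lia.
    rewrite ?E7.
    have E8 : (n.+2 == n) = false by lia.
    rewrite ?E8.
    have E9 : (n == n.+2) = false by lia.
    rewrite ?E9.
    have E10 : (n == n.+1) = false by lia.
    rewrite ?E10.
    by rewrite hb /= !addr0 !add0r conjCK.
  have F1 : (m == n.+1) = false by rewrite eq_sym (negbTE h2).
  have F2 : (m == n) = false by rewrite eq_sym (negbTE hnm).
  have F3 : (m.+1 == n) = false by rewrite eq_sym (negbTE h1).
  by rewrite ?F1 ?F2 ?F3 ?(negbTE hnm) ?(negbTE h1) ?(negbTE h2) !addr0 rmorph0.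
have sym2 : forall n m, ip (H0 (e n)) (e m) = ip (e n) (H0 (e m)).
  by move=> n m; rewrite (@ipC _ _ _ hip) -sym.
case: hDsub => D0 DD DZ.
case: hHlin => _ Hl.
have H00 : H 0 = 0.
  have := Hl (-1) 0 0; rewrite scaler0 addr0 scaleN1r addNr => -> //;
  by apply/hDdomH.
have Hsum : forall n (c : nat -> R[i]) (y : nat -> V), (forall k, D (y k)) ->
   D (\sum_(k < n) c k *: y k) /\
   H (\sum_(k < n) c k *: y k) = \sum_(k < n) c k *: H (y k).
  move=> + c y hy; elim=> [|n [IH1 IH2]]; first by rewrite !big_ord0.
  rewrite !big_ord_recr /= addrC [X in _ = X]addrC.
  split; first by apply: DD => //; apply: DZ.
  by rewrite Hl ?IH2 //; apply: hDdomH.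
have H0sum : forall n (c : nat -> R[i]),
   H0 (\sum_(k < n) c k *: e k) = \sum_(k < n) c k *: H0 (e k).
  move=> n c; rewrite /H0 linear_sum.
  under eq_bigr do rewrite linearZ.
  rewrite (proj2 (Hsum n c (fun k => Rop (e k)) _)); last by move=> k; apply/hDR.
  by rewrite linear_sum; apply: eq_bigr => k _; rewrite linearZ.
move=> f g [N [c ->]] [M [d ->]].
rewrite !H0sum (@ip_suml _ _ _ hip _ N c e) (@ip_suml _ _ _ hip _ N c (fun k => H0 (e k))).
apply: eq_bigr => k _; congr (_ * _).
rewrite (@ip_sumr _ _ _ hip _ M d (fun k => H0 (e k))) (@ip_sumr _ _ _ hip _ M d e).
by apply: eq_bigr => j _; rewrite sym2.
Qed.
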